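(* Let $\pi_1\in\mathfrak{S}_k$ and $\pi_2\in\mathfrak{S}_\ell$ be non-empty permutations and $1\le i\le\operatorname{slmax}(\pi_2)$. Then \begin{align*} \operatorname{lmax}(C_1(\pi_1,\pi_2))=\operatorname{lmax}(C_2(\pi_1,\pi_2,i))&=\operatorname{lmax}(\pi_1)+1,\\ \operatorname{rmax}(C_1(\pi_1,\pi_2))=\operatorname{rmax}(C_2(\pi_1,\pi_2,i))&=1+\operatorname{rmax}(\pi_2),\\ \operatorname{asc}(C_1(\pi_1,\pi_2))=\operatorname{asc}(C_2(\pi_1,\pi_2,i))&=\operatorname{asc}(\pi_1)+1+\operatorname{asc}(\pi_2),\\ \operatorname{des}(C_1(\pi_1,\pi_2))=\operatorname{des}(C_2(\pi_1,\pi_2,i))&=\operatorname{des}(\pi_1)+1+\operatorname{des}(\pi_2),\\ \operatorname{len}(C_1(\pi_1,\pi_2))=\operatorname{len}(C_2(\pi_1,\pi_2,i))&=\operatorname{len}(\pi_1)+1+\operatorname{len}(\pi_2),\\ \operatorname{sldes}(C_1(\pi_1,\pi_2))&=\operatorname{sldes}(\pi_1)+\operatorname{sldes}(\pi_2),\\ \operatorname{sldes}(C_2(\pi_1,\pi_2,i))&=\operatorname{sldes}(\pi_1)+\operatorname{sldes}(\pi_2)+1. \end{align*} Furthermore, when one of $\pi_1,\pi_2$ is empty, the formulas for $C_1(\pi_1,\pi_2)$ still hold, except that $\operatorname{asc}(C_1(\epsilon,\pi_2))=\operatorname{asc}(\pi_2)$ and $\operatorname{des}(C_1(\pi_1,\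epsilon))=\operatorname{des}(\pi_1)$.
   Context: For a finite sequence $A$ of distinct integers, the stack-sorting operator $\mathcal{S}$ is defined by $\mathcal{S}(\epsilon)=\epsilon$ for the empty sequence and, if $A$ is non-empty with largest element $m$, writing $A=A_L\cdot(m)\cdot A_R$ (concatenation), $\mathcal{S}(A)=\mathcal{S}(A_L)\cdot\mathcal{S}(A_R)\cdot(m)$. Permutations are viewed as sequences. For a sequence $\tau$: $\tau^{+k}$ adds $k$ to each element; for $k_1<k_2$, $\tau^{+(k_1,m,k_2)}$ adds $k_1$ to elements strictly smaller than $m$ and $k_2$ to the others. For a permutation $\sigma$: $\operatorname{len}(\sigma)$ is its length; $\operatorname{lmax}(\sigma)$ (resp. $\operatorname{rmax}(\sigma)$) is the number of indices $i$ with $\sigma(i)>\sigma(j)$ for all $j<i$ (resp. all $j>i$); $\operatorname{asc}(\sigma)$ (resp. $\operatorname{des}(\sigma)$) is the number of indices $i$ with $\sigma(i)<\sigma(i+1)$ (resp. $\sigma(i)>\sigma(i+1)$); $\operatorname{slmax}(\sigma)$ is the number of left-to-right maxima of $\mathcal{S}(\sigma)$; $\operatorname{sldes}(\sigma)$ is the number of elements $a$ such that $a$ precedes $a-1$ in $\mathcal{S}(\sigma)$. All these statistics are $0$ on the empty permutation $\epsilon$. For permutations $\pi_1\in\mathfrak{S}_k$, $\pi_2\in\mathfrak{S}_\ell$ (possibly empty, $\mathfrak{S}_0=\{\epsilon\}$), $C_1(\pi_1,\pi_2)=\pi_1\cdot(k+\ell+1)\cdot\pi_2^{+k}$; for non-empty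 $\pi_1,\pi_2$, with $a_1,\dots,a_t$ the values of the left-to-right maxima of $\mathcal{S}(\pi_2)$ in order and $1\le i\le t$, $C_2(\pi_1,\pi_2,i)=\pi_1^{+(0,k,a_i)}\cdot(k+\ell+1)\cdot\pi_2^{+(k-1,a_i+1,k)}$. *)

(* Defs.v *)
(* Permutations of [n] are sequences of naturals that are
   rearrangements of 1..n (one-line notation). *)
From mathcomp Require Import all_boot.
Set Implicit Arguments. Unset Strict Implicit. Unset Printing Implicit Defensive.

Definition is_perm (s : seq nat) : bool := perm_eq s (iota 1 (size s)).

Fixpoint ssort_fuel (n : nat) (s : seq nat) : seq nat :=
  match n with
  | 0 => s
  | n'.+1 =>
    if s is [::] then [::] else
    let m := \max_(x <- s) x in
    let i := index m s in
    ssort_fuel n' (take i s) ++ ssort_fuel n' (drop i.+1 s) ++ [:: m]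
  end.

Definition stack_sort (s : seq nat) : seq nat := ssort_fuel (size s) s.

Definition shift (k : nat) (s : seq nat) : seq nat := map (addn k) s.
Definition shift3 (k1 m k2 : nat) (s : seq nat) : seq nat :=
  map (fun x => if x < m then x + k1 else x + k2) s.

Definition len (s : seq nat) : nat := size s.

Definition lmax_vals (s : seq nat) : seq nat :=
  [seq nth 0 s i | i <- iota 0 (size s) &
     all (fun j => nth 0 s j < nth 0 s i) (iota 0 i)].
Definition lmax (s : seq nat) : nat := size (lmax_vals s).
Definition rmax (s : seq nat) : nat :=
  count (fun i => all (fun j => nth 0 s j < nth 0 s i)
                      (iota i.+1 (size s - i.+1))) (iota 0 (size s)).
Definition asc (s : seq nat) : nat :=
  count (fun i => nth 0 s i < nth 0 s i.+1) (iota 0 (size s).-1).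
Definition des (s : seq nat) : nat :=
  count (fun i => nth 0 s i > nth 0 s i.+1) (iota 0 (size s).-1).
Definition slmax (s : seq nat) : nat := lmax (stack_sort s).
Definition sldes (s : seq nat) : nat :=
  let t := stack_sort s in
  count (fun a => (0 < a) && (a.-1 \in t) && (index a t < index a.-1 t)) t.

Definition C1 (p1 p2 : seq nat) : seq nat :=
  p1 ++ [:: size p1 + size p2 + 1] ++ shift (size p1) p2.

(* i is 1-based: a_i = the i-th left-to-right maximum value of S(p2) *)
Definition C2 (p1 p2 : seq nat) (i : nat) : seq nat :=
  let k := size p1 in let l := size p2 in
  let a := nth 0 (lmax_vals (stack_sort p2)) i.-1 in
  shift3 0 k a p1 ++ [:: k + l + 1] ++ shift3 k.-1 a.+1 k p2.

(* Main.v *)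
Require Import Defs.
From mathcomp Require Import all_boot zify.
Set Implicit Arguments. Unset Strict Implicit. Unset Printing Implicit Defensive.

Lemma max_cons x s : \max_(y <- x :: s) y = maxn x (\max_(y <- s) y).
Proof. by rewrite big_cons. Qed.

Lemma max_ub s y : y \in s -> y <= \max_(x <- s) x.
Proof.
elim: s => [|x s IH] //; rewrite in_cons max_cons => /orP [/eqP ->|/IH H].
  exact: leq_maxl.
by rewrite (leq_trans H) // leq_maxr.
Qed.

Lemma max_mem s : s != [::] -> \max_(x <- s) x \in s.
Proof.
elim: s => [|x s IH] // _; rewrite max_cons in_cons.
case: s IH => [|y s] IH; first by rewrite big_nil maxn0 eqxx.
case: (leqP x (\max_(z <- y :: s) z)) => H.
  by rewrite IH ?orbT.
by rewrite eqxx.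
Qed.

Lemma max_eq s z : z \in s -> (forall y, y \in s -> y <= z) -> \max_(x <- s) x = z.
Proof.
move=> zs H; apply/eqP; rewrite eqn_leq max_ub // andbT H // max_mem //.
by apply/negP => /eqP E; rewrite E in zs.
Qed.

Lemma fuel_eq n m s : size s <= n -> size s <= m -> ssort_fuel n s = ssort_fuel m s.
Proof.
elim: n m s => [|n IH] [|m] s.
- by [].
- by case: s.
- by case: s.
case: s => [|x s] //= Hn Hm.
set M := \max_(y <- x :: s) y.
have Hi : index M (x :: s) < (size s).+1 by rewrite -[(size s).+1]/(size (x::s)) index_mem max_mem.
rewrite (IH m (take _ _)) ?(IH m (drop _ _)) //; rewrite ?size_take ?size_drop /=;
  move: Hi => /=; case: eqP => _ Hi; try (case: ltnP => ?); lia.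
Qed.

Lemma fuel_ok n s : size s <= n -> ssort_fuel n s = stack_sort s.
Proof. by move=> H; rewrite /stack_sort; apply: fuel_eq. Qed.

Lemma stack_sort_unfold s : s != [::] ->
  stack_sort s = stack_sort (take (index (\max_(x <- s) x) s) s) ++
     stack_sort (drop (index (\max_(x <- s) x) s).+1 s) ++ [:: \max_(x <- s) x].
Proof.
case: s => [|x s] // _.
have Hi : index (\max_(y <- x :: s) y) (x :: s) < (size s).+1
  by rewrite -[(size s).+1]/(size (x::s)) index_mem max_mem.
rewrite {1}/stack_sort /=.
by rewrite !fuel_ok // ?size_take ?size_drop /=;
  move: Hi => /=; case: eqP => _ Hi; try (case: ltnP => ?); lia.
Qed.

Lemma idx_lt s : s != [::] -> index (\max_(x <- s) x) s < size s.
Proof. by move=> H; rewrite index_mem max_mem. Qed.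

Lemma perm_ss s : perm_eq (stack_sort s) s.
Proof.
move: {2}(size s) (leqnn (size s)) => n; elim: n s => [|n IH] s Hs.
  by case: s Hs.
case: (eqVneq s [::]) => [->//|sn0].
rewrite stack_sort_unfold //.
set M := \max_(x <- s) x; set i := index M s.
have Hi : i < size s := idx_lt sn0.
have Es : s = take i s ++ M :: drop i.+1 s.
  by rewrite -{1}(cat_take_drop i s) (drop_nth 0 Hi) nth_index // max_mem.
rewrite {3}Es; apply: perm_cat.
  by apply: IH; rewrite size_take Hi; lia.
rewrite perm_catC cat1s perm_cons; apply: IH; rewrite size_drop; lia.
Qed.

Lemma ss_join A N B : (forall y, y \in A -> y < N) -> (forall y, y \in B -> y < N) ->
  stack_sort (A ++ N :: B) = stack_sort A ++ stack_sort B ++ [:: N].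
Proof.
move=> HA HB.
have hmax : \max_(x <- A ++ N :: B) x = N.
  apply: max_eq; first by rewrite mem_cat in_cons eqxx orbT.
  move=> y; rewrite mem_cat in_cons => /orP [/HA/ltnW//|/orP [/eqP->//|/HB/ltnW//]].
have NA : N \notin A by apply/negP => /HA; rewrite ltnn.
rewrite stack_sort_unfold; last by case: A {HA NA hmax}.
rewrite hmax take_pivot // index_pivot //.
by rewrite -(cat_rcons N A B) (drop_size_cat _ (size_rcons A N)).
Qed.

Lemma ss_map f s : {mono f : x y / x < y} -> stack_sort (map f s) = map f (stack_sort s).
Proof.
move=> fm.
have finj : injective f.
  by move=> x y E; apply/eqP; case: ltngtP => // H; move: H; rewrite -fm E ltnn.
move: {2}(size s) (leqnn (size s)) => n; elim: n s => [|n IH] s Hs.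
  by case: s Hs.
case: (eqVneq s [::]) => [->//|sn0].
have Hi := idx_lt sn0.
have hmax : \max_(x <- map f s) x = f (\max_(x <- s) x).
  apply: max_eq; first by rewrite map_f // max_mem.
  move=> y /mapP [z zs ->]; rewrite leqNgt fm -leqNgt; exact: max_ub.
rewrite stack_sort_unfold; last by rewrite -size_eq0 size_map size_eq0.
rewrite hmax index_map // -map_take -map_drop.
rewrite (IH (take _ _)); last by rewrite size_take Hi -ltnS (leq_trans Hi Hs).
rewrite (IH (drop _ _)); last by rewrite size_drop; lia.
by rewrite (stack_sort_unfold sn0) !map_cat.
Qed.

Lemma eq_in_all' (a1 a2 : nat -> bool) s : (forall x, x \in s -> a1 x = a2 x) -> all a1 s = all a2 s.
Proof. exact: eq_in_all. Qed.
Lemma eq_in_count' (a1 a2 : nat -> bool) s : (forall x, x \in s -> a1 x = a2 x) -> count a1 s = count a2 s.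
Proof. exact: eq_in_count. Qed.

Lemma iotaS1 m n : iota m.+1 n = map (addn 1) (iota m n).
Proof. exact: (iotaDl 1 m n). Qed.

Lemma asc_cons x s : asc (x :: s) = (x < head x s) + asc s.
Proof.
rewrite /asc; case: s => [|y s] /=; first by rewrite ltnn.
rewrite iotaS1 count_map; congr (_ + _).
Qed.

Lemma des_cons x s : des (x :: s) = (head x s < x) + des s.
Proof.
rewrite /des; case: s => [|y s] /=; first by rewrite ltnn.
rewrite iotaS1 count_map; congr (_ + _).
Qed.

Lemma all_iota_nth (P : pred nat) s : all (fun j => P (nth 0 s j)) (iota 0 (size s)) = all P s.
Proof. by rewrite -[in RHS](mkseq_nth 0 s) /mkseq all_map. Qed.

Lemma lmax_rcons s y : lmax (rcons s y) = lmax s + all (fun z => z < y) s.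
Proof.
rewrite /lmax /lmax_vals !size_map !size_filter size_rcons -addn1 iotaD count_cat add0n /= addn0.
congr (_ + _).
  apply: eq_in_count => i; rewrite mem_iota add0n => /andP [_ Hi] /=.
  rewrite nth_rcons Hi; apply eq_in_all' => j; rewrite mem_iota add0n => /andP [_ Hj].
  by rewrite nth_rcons (ltn_trans Hj Hi).
rewrite nth_rcons ltnn eqxx -[in RHS]all_iota_nth; congr (nat_of_bool _); apply eq_in_all' => j.
by rewrite mem_iota add0n => /andP [_ Hj]; rewrite nth_rcons Hj.
Qed.

Lemma rmax_cons x s : rmax (x :: s) = all (fun z => z < x) s + rmax s.
Proof.
rewrite /rmax /= subn1 /= (iotaS1 0 (size s)) all_map; congr (_ + _).
  by congr (nat_of_bool _); rewrite -[in RHS]all_iota_nth; apply eq_in_all'.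
rewrite count_map; apply: eq_count => i /=.
by rewrite iotaS1 all_map.
Qed.

Section Join.
Variables (A B : seq nat) (N : nat).

Lemma asc_join : (forall y, y \in A -> y < N) -> (forall y, y \in B -> y < N) ->
  asc (A ++ N :: B) = asc A + (A != [::]) + asc B.
Proof.
move=> HA HB; elim: A HA => [|x A' IH] HA /=.
  rewrite asc_cons; case: B HB => [|y B'] HB /=; first by rewrite ltnn.
  by rewrite (leq_gtF (ltnW (HB _ (mem_head _ _)))).
rewrite !asc_cons IH; last by move=> y Hy; apply: HA; rewrite in_cons Hy orbT.
case: A' {IH} HA => [|z A'] HA /=.
  by rewrite HA ?mem_head // ltnn /=; lia.
lia.
Qed.

Lemma des_join : (forall y, y \in A -> y < N) -> (forall y, y \in B -> y < N) ->
  des (A ++ N :: B) = des A + (B != [::]) + des B.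
Proof.
move=> HA HB; elim: A HA => [|x A' IH] HA /=.
  rewrite des_cons; case: B HB => [|y B'] HB /=; first by rewrite ltnn.
  by rewrite (HB _ (mem_head _ _)).
rewrite !des_cons IH; last by move=> y Hy; apply: HA; rewrite in_cons Hy orbT.
case: A' {IH} HA => [|z A'] HA /=.
  by rewrite (leq_gtF (ltnW (HA _ (mem_head _ _)))) ltnn /=; lia.
lia.
Qed.

Lemma lmax_join : (forall y, y \in A -> y < N) -> (forall y, y \in B -> y < N) ->
  lmax (A ++ N :: B) = lmax A + 1.
Proof.
move=> HA; elim/last_ind: B => [|B' y IH] HB.
  by rewrite cats1 lmax_rcons; congr (_ + _); have -> : all (fun z => z < N) A by apply/allP.
rewrite -rcons_cons -rcons_cat lmax_rcons IH; last by move=> z Hz; apply: HB; rewrite mem_rcons in_cons Hz orbT.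
have -> : all (fun z => z < y) (A ++ N :: B') = false.
  apply/negbTE/negP => /allP /(_ N); rewrite mem_cat mem_head orbT => /(_ isT).
  by rewrite ltnNge ltnW // HB // mem_rcons mem_head.
by rewrite addn0.
Qed.

Lemma rmax_join : (forall y, y \in A -> y < N) -> (forall y, y \in B -> y < N) ->
  rmax (A ++ N :: B) = 1 + rmax B.
Proof.
move=> HA HB; elim: A HA => [|x A' IH] HA /=.
  by rewrite rmax_cons; have -> : all (fun z => z < N) B by apply/allP.
rewrite rmax_cons IH; last by move=> y Hy; apply: HA; rewrite in_cons Hy orbT.
have -> : all (fun z => z < x) (A' ++ N :: B) = false.
  apply/negbTE/negP => /allP /(_ N); rewrite mem_cat mem_head orbT => /(_ isT).
  by rewrite ltnNge ltnW // HA // mem_head.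
by [].
Qed.
End Join.

Section Mono.
Variables (f : nat -> nat).
Hypothesis fm : {mono f : x y / x < y}.

Lemma asc_map s : asc (map f s) = asc s.
Proof.
elim: s => [|x s IH] //=; rewrite !asc_cons IH; case: s {IH} => [|y s] /=.
  by rewrite !ltnn.
by rewrite fm.
Qed.

Lemma des_map s : des (map f s) = des s.
Proof.
elim: s => [|x s IH] //=; rewrite !des_cons IH; case: s {IH} => [|y s] /=.
  by rewrite !ltnn.
by rewrite fm.
Qed.

Lemma lmax_map s : lmax (map f s) = lmax s.
Proof.
elim/last_ind: s => [|s y IH] //; rewrite map_rcons !lmax_rcons IH all_map.
by congr (_ + nat_of_bool _); apply: eq_all => z /=; rewrite fm.
Qed.

Lemma rmax_map s : rmax (map f s) = rmax s.
Proof.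
elim: s => [|x s IH] //=; rewrite !rmax_cons IH all_map.
by congr (nat_of_bool _ + _); apply: eq_all => z /=; rewrite fm.
Qed.
End Mono.

Definition dsc (t : seq nat) (a : nat) :=
  (0 < a) && (a.-1 \in t) && (index a t < index a.-1 t).

Lemma sldesE s : sldes s = count (dsc (stack_sort s)) (stack_sort s).
Proof. by []. Qed.

Lemma dsc_catl u v a : uniq (u ++ v) -> a \in u ->
  dsc (u ++ v) a = dsc u a || ((0 < a) && (a.-1 \in v)).
Proof.
rewrite cat_uniq => /and3P [_ dis _] au.
rewrite /dsc mem_cat !index_cat au; case: (boolP (a.-1 \in u)) => Hu /=.
  have Hv : a.-1 \notin v.
    by apply: (contra _ dis) => Hv; apply/hasP; exists a.-1.
  by rewrite (negbTE Hv); case: (0 < a); case: (_ < _).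
have := index_mem a u; rewrite au => Hl.
rewrite (leq_trans Hl (leq_addr _ _)) andbT.
by case: (0 < a); case: (_ \in v).
Qed.

Lemma dsc_catr u v a : uniq (u ++ v) -> a \in v -> dsc (u ++ v) a = dsc v a.
Proof.
rewrite cat_uniq => /and3P [_ dis _] av.
have au : a \notin u by apply: (contra _ dis) => Hu; apply/hasP; exists a.
rewrite /dsc mem_cat !index_cat (negbTE au); case: (boolP (a.-1 \in u)) => Hu /=.
  have Hv : a.-1 \notin v.
    by apply: (contra _ dis) => Hv; apply/hasP; exists a.-1.
  rewrite (negbTE Hv) andbF andbT.
  have := index_mem a.-1 u; rewrite Hu => Hl.
  have F : (size u + index a v < index a.-1 u) = false.
    by rewrite ltnNge (leq_trans (ltnW Hl) (leq_addr _ _)).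
  by rewrite F andbF.
by rewrite ltn_add2l.
Qed.

Lemma dsc_map f s x : injective f -> 0 < x -> 0 < f x -> f x.-1 = (f x).-1 ->
  dsc (map f s) (f x) = dsc s x.
Proof.
by move=> fi x0 fx0 E; rewrite /dsc -E mem_map // !index_map // fx0 x0.
Qed.

Lemma dsc_notin t b : b.-1 \notin t -> dsc t b = false.
Proof. by move=> H; rewrite /dsc (negbTE H) andbF. Qed.

Lemma dsc_single N : dsc [:: N] N = false.
Proof.
rewrite /dsc mem_seq1; case: (posnP N) => [->//|Np].
by rewrite ltn_eqF ?andbF // ltn_predL.
Qed.

Lemma sldes_join A N B : uniq (A ++ N :: B) ->
  (forall y, y \in A -> y < N) -> (forall y, y \in B -> y < N) ->
  sldes (A ++ N :: B) =
  count (fun a => dsc (stack_sort A) a || ((0 < a) && (a.-1 \in stack_sort B)))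
        (stack_sort A) + count (dsc (stack_sort B)) (stack_sort B).
Proof.
move=> UA HA HB; rewrite sldesE ss_join //.
have P : perm_eq (stack_sort A ++ stack_sort B ++ [:: N]) (A ++ N :: B).
  apply: (perm_trans (perm_cat (perm_ss A) (perm_cat (perm_ss B) (perm_refl [:: N])))).
  by rewrite perm_cat2l perm_catC.
have U := UA; rewrite -(perm_uniq P) in U.
have U2 : uniq (stack_sort B ++ [:: N]) by move: U; rewrite cat_uniq => /and3P [].
rewrite count_cat; congr (_ + _).
  apply eq_in_count' => a aA; rewrite dsc_catl // mem_cat mem_seq1.
  have : a < N by apply: HA; rewrite -(perm_mem (perm_ss A)).
  by move=> aN; rewrite (ltn_eqF (leq_ltn_trans (leq_pred a) aN)) orbF.
rewrite count_cat /= dsc_catr ?mem_cat ?mem_seq1 ?eqxx ?orbT // dsc_catr ?mem_seq1 //.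
rewrite dsc_single addn0 -[nat_of_bool false]/0 addn0; apply eq_in_count' => a aB.
rewrite dsc_catr ?mem_cat ?aB // dsc_catl // mem_seq1.
have : a < N by apply: HB; rewrite -(perm_mem (perm_ss B)).
by move=> aN; rewrite (ltn_eqF (leq_ltn_trans (leq_pred a) aN)) andbF orbF.
Qed.

Lemma is_perm_uniq s : is_perm s -> uniq s.
Proof. by move=> H; rewrite (perm_uniq H) iota_uniq. Qed.

Lemma is_perm_mem s x : is_perm s -> (x \in s) = (0 < x <= size s).
Proof. by move=> H; rewrite (perm_mem H) mem_iota add1n ltnS. Qed.

Lemma mono_inj f : {mono f : x y / x < y} -> injective f.
Proof. by move=> fm x y E; apply/eqP; case: ltngtP => // H; move: H; rewrite -fm E ltnn. Qed.

Lemma uniq_join A N B : uniq A -> uniq B ->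
  (forall y, y \in A -> y < N) -> (forall y, y \in B -> y < N) ->
  (forall x, x \in A -> x \in B -> False) -> uniq (A ++ N :: B).
Proof.
move=> UA UB HA HB D; rewrite cat_uniq UA cons_uniq UB andbT /=.
have NA : N \notin A by apply/negP => /HA; rewrite ltnn.
have NB : N \notin B by apply/negP => /HB; rewrite ltnn.
rewrite negb_or (negbTE NA) NB andbT /=.
by apply/hasPn => x xB; apply/negP => xA; apply: (D x).
Qed.

Lemma lmax_vals_mem t a : a \in lmax_vals t -> a \in t.
Proof.
by move=> /mapP [i]; rewrite mem_filter mem_iota => /andP [_ /andP [_ Hi]] ->; apply: mem_nth.
Qed.

Lemma lmax_vals_prop t a y : uniq t -> a \in lmax_vals t -> y \in t ->
  index y t < index a t -> y < a.
Proof.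
move=> U /mapP [i]; rewrite mem_filter mem_iota add0n => /andP [Hall /andP [_ Hi]] ->.
rewrite index_uniq // => yt Hy.
move/allP: Hall => /(_ (index y t)); rewrite mem_iota Hy andbT => /(_ isT).
by rewrite nth_index.
Qed.

Lemma count_false (s : seq nat) : count (fun _ => false) s = 0.
Proof. by elim: s. Qed.

Lemma count_eq1 (s : seq nat) k : uniq s -> k \in s -> count (fun x => x == k) s = 1.
Proof.
move=> U K; rewrite -[1]/(nat_of_bool true) -K -(count_uniq_mem k U); exact: eq_count.
Qed.

Lemma ss_last_max s : is_perm s -> s != [::] -> dsc (stack_sort s) (size s) = false.
Proof.
move=> P sn0.
have hmax : \max_(x <- s) x = size s.
  apply: max_eq; first by rewrite is_perm_mem // leqnn andbT lt0n size_eq0.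
  by move=> y; rewrite is_perm_mem // => /andP [].
have U : uniq (stack_sort s) by rewrite (perm_uniq (perm_ss s)) is_perm_uniq.
move: U; rewrite (stack_sort_unfold sn0) hmax catA => U.
by rewrite dsc_catr ?mem_seq1 // dsc_single.
Qed.

Lemma C1_stats p1 p2 : is_perm p1 -> is_perm p2 ->
  lmax (C1 p1 p2) = lmax p1 + 1 /\ rmax (C1 p1 p2) = 1 + rmax p2 /\
      asc (C1 p1 p2) = asc p1 + (p1 != [::]) + asc p2 /\
      des (C1 p1 p2) = des p1 + (p2 != [::]) + des p2 /\
      len (C1 p1 p2) = len p1 + 1 + len p2 /\
      sldes (C1 p1 p2) = sldes p1 + sldes p2.
Proof.
move=> P1 P2.
set k := size p1; set l := size p2.
have E : C1 p1 p2 = p1 ++ (k + l + 1) :: map (addn k) p2 by [].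
have fm : {mono addn k : x y / x < y} by move=> x y; rewrite ltn_add2l.
have HA : forall y, y \in p1 -> y < k + l + 1.
  by move=> y; rewrite is_perm_mem // -/k; lia.
have HB : forall y, y \in map (addn k) p2 -> y < k + l + 1.
  by move=> y /mapP [z]; rewrite is_perm_mem // -/l => Hz ->; lia.
have U : uniq (p1 ++ (k + l + 1) :: map (addn k) p2).
  apply: uniq_join => //; first exact: is_perm_uniq.
    by rewrite map_inj_uniq ?is_perm_uniq //; apply: mono_inj.
  move=> x; rewrite is_perm_mem // -/k => Hx /mapP [z]; rewrite is_perm_mem // => Hz Ex; lia.
rewrite E; repeat split.
- exact: lmax_join.
- by rewrite rmax_join // rmax_map.
- by rewrite asc_join // asc_map.
- by rewrite des_join // des_map //; case: (p2).
- by rewrite /len size_cat /= size_map; lia.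
rewrite sldes_join // ss_map //; congr (_ + _).
  rewrite sldesE; apply eq_in_count' => x.
  rewrite (perm_mem (perm_ss p1)) is_perm_mem // -/k => Hx.
  case: (_ \in map _ _) /mapP; last by rewrite andbF orbF.
  move=> [z]; rewrite (perm_mem (perm_ss p2)) is_perm_mem // => Hz Ex; lia.
rewrite sldesE count_map; apply eq_in_count' => x.
rewrite (perm_mem (perm_ss p2)) is_perm_mem // => Hx /=.
apply: dsc_map; [exact: mono_inj | lia | lia | lia].
Qed.

Definition g1 k a x := if x < k then x + 0 else x + a.
Definition g2 k a x := if x < a.+1 then x + k.-1 else x + k.

Lemma C2_stats p1 p2 i : is_perm p1 -> is_perm p2 -> p1 != [::] -> p2 != [::] ->
  1 <= i <= slmax p2 ->
  lmax (C2 p1 p2 i) = lmax p1 + 1 /\ rmax (C2 p1 p2 i) = 1 + rmax p2 /\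
  asc (C2 p1 p2 i) = asc p1 + 1 + asc p2 /\
  des (C2 p1 p2 i) = des p1 + 1 + des p2 /\
  len (C2 p1 p2 i) = len p1 + 1 + len p2 /\
  sldes (C2 p1 p2 i) = sldes p1 + sldes p2 + 1.
Proof.
move=> P1 P2 n1 n2 /andP [i1 iS].
set k := size p1; set l := size p2.
set a := nth 0 (lmax_vals (stack_sort p2)) i.-1.
have k1 : 0 < k by rewrite lt0n size_eq0.
have aL : a \in lmax_vals (stack_sort p2).
  by apply: mem_nth; rewrite /slmax /lmax in iS; rewrite -ltnS prednK.
have aT : a \in stack_sort p2 by apply: lmax_vals_mem.
have aR : 0 < a <= l by rewrite -is_perm_mem // -(perm_mem (perm_ss p2)).
have E : C2 p1 p2 i = map (g1 k a) p1 ++ (k + l + 1) :: map (g2 k a) p2 by [].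
have fm1 : {mono g1 k a : x y / x < y}.
  move=> x y; rewrite /g1; case: (ltnP x k) => hx; case: (ltnP y k) => hy; lia.
have fm2 : {mono g2 k a : x y / x < y}.
  move=> x y; rewrite /g2; case: (ltnP x a.+1) => hx; case: (ltnP y a.+1) => hy; lia.
have HA : forall y, y \in map (g1 k a) p1 -> y < k + l + 1.
  move=> y /mapP [z]; rewrite is_perm_mem // -/k => Hz ->; rewrite /g1.
  case: (ltnP z k) => ?; lia.
have HB : forall y, y \in map (g2 k a) p2 -> y < k + l + 1.
  move=> y /mapP [z]; rewrite is_perm_mem // -/l => Hz ->; rewrite /g2.
  case: (ltnP z a.+1) => ?; lia.
have U : uniq (map (g1 k a) p1 ++ (k + l + 1) :: map (g2 k a) p2).
  apply: uniq_join => //.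
  - by rewrite map_inj_uniq ?is_perm_uniq //; apply: mono_inj.
  - by rewrite map_inj_uniq ?is_perm_uniq //; apply: mono_inj.
  move=> x /mapP [z]; rewrite is_perm_mem // -/k => Hz -> /mapP [w].
  rewrite is_perm_mem // -/l /g1 /g2 => Hw.
  case: (ltnP z k) => ?; case: (ltnP w a.+1) => ?; lia.
rewrite E; repeat split.
- by rewrite lmax_join // lmax_map.
- by rewrite rmax_join // rmax_map.
- by rewrite asc_join // !asc_map // -size_eq0 size_map size_eq0 n1.
- by rewrite des_join // !des_map // -size_eq0 size_map size_eq0 n2.
- by rewrite /len size_cat /= !size_map; lia.
set T1 := stack_sort p1; set T2 := stack_sort p2.
have U1 : uniq T1 by rewrite (perm_uniq (perm_ss p1)) is_perm_uniq.
have U2 : uniq T2 by rewrite (perm_uniq (perm_ss p2)) is_perm_uniq.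
have M1 : forall x, (x \in T1) = (0 < x <= k) by move=> x; rewrite (perm_mem (perm_ss p1)) is_perm_mem.
have M2 : forall x, (x \in T2) = (0 < x <= l) by move=> x; rewrite (perm_mem (perm_ss p2)) is_perm_mem.
rewrite sldes_join // !ss_map // -/T1 -/T2 !sldesE -/T1 -/T2.
have -> : count (fun b => dsc (map (g1 k a) T1) b || (0 < b) && (b.-1 \in map (g2 k a) T2))
           (map (g1 k a) T1) = count (dsc T1) T1 + 1.
  rewrite count_map.
  rewrite (eq_in_count' (a2 := fun x => dsc T1 x || (x == k))); last first.
    move=> x; rewrite M1 => Hx /=.
    case: (ltnP x k) => hx.
      have -> : (g1 k a x).-1 \in map (g2 k a) T2 = false.
        apply/negbTE/negP => /mapP [w]; rewrite M2 /g1 /g2 => Hw.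
        rewrite hx; case: (ltnP w a.+1) => ?; lia.
      rewrite andbF orbF (_ : x == k = false) ?orbF; last by apply/negbTE; rewrite neq_ltn hx.
      apply: dsc_map; [exact: mono_inj | lia | rewrite /g1 hx; lia | ].
      by rewrite /g1 hx; case: (ltnP x.-1 k) => ?; lia.
    have xk : x = k by lia.
    subst x; rewrite eqxx orbT.
    have -> : (g1 k a k).-1 \in map (g2 k a) T2.
      apply/mapP; exists a => //; rewrite /g1 /g2 ltnn ltnSn; lia.
    by rewrite andbT /g1 ltnn (_ : 0 < k + a) ?orbT //; lia.
  have H := count_predUI (dsc T1) (fun x => x == k) T1.
  have H0 : count (predI (dsc T1) (fun x => x == k)) T1 = 0.
    rewrite (eq_in_count' (a2 := fun _ => false)) ?count_false // => x _ /=.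
    case: eqP => [->|]; last by rewrite andbF.
    by rewrite /T1 ss_last_max.
  rewrite H0 addn0 (count_eq1 U1) ?M1 ?leqnn ?andbT // in H.
rewrite count_map.
rewrite (eq_in_count' (s := T2) (a2 := dsc T2)); first by lia.
move=> x; rewrite M2 => Hx /=.
case: (eqVneq x a.+1) => [xa|xa].
  subst x; rewrite dsc_notin; last first.
    apply/negP => /mapP [w]; rewrite M2 /g1 /g2 ltnn => Hw.
    case: (ltnP w a.+1) => ?; lia.
  apply/esym/negbTE/negP; rewrite /dsc => /andP [/andP [_ _] Hidx].
  have aS : a.+1 \in T2 by rewrite -index_mem (ltn_trans Hidx) // index_mem.
  have := lmax_vals_prop U2 aL aS Hidx; lia.
apply: dsc_map; [exact: mono_inj | lia | rewrite /g2; case: (ltnP x a.+1) => ?; lia | ].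
rewrite /g2; case: (ltnP x a.+1) => ?; case: (ltnP x.-1 a.+1) => ?; lia.
Qed.
Theorem proposition9 :
  (forall (p1 p2 : seq nat) (i : nat),
    is_perm p1 -> is_perm p2 -> p1 != [::] -> p2 != [::] ->
    1 <= i <= slmax p2 ->
    ((lmax (C1 p1 p2) = lmax p1 + 1 /\ lmax (C2 p1 p2 i) = lmax p1 + 1) /\
        (rmax (C1 p1 p2) = 1 + rmax p2 /\ rmax (C2 p1 p2 i) = 1 + rmax p2) /\
        (asc (C1 p1 p2) = asc p1 + 1 + asc p2 /\
          asc (C2 p1 p2 i) = asc p1 + 1 + asc p2) /\
        (des (C1 p1 p2) = des p1 + 1 + des p2 /\
          des (C2 p1 p2 i) = des p1 + 1 + des p2) /\
        (len (C1 p1 p2) = len p1 + 1 + len p2 /\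
          len (C2 p1 p2 i) = len p1 + 1 + len p2) /\
        sldes (C1 p1 p2) = sldes p1 + sldes p2 /\
        sldes (C2 p1 p2 i) = sldes p1 + sldes p2 + 1)) /\
  (forall (p1 p2 : seq nat),
    is_perm p1 -> is_perm p2 -> (p1 == [::]) || (p2 == [::]) ->
    [/\ lmax (C1 p1 p2) = lmax p1 + 1 /\
        rmax (C1 p1 p2) = 1 + rmax p2,
        (if p1 == [::] then asc (C1 p1 p2) = asc p2
         else asc (C1 p1 p2) = asc p1 + 1 + asc p2),
        (if p2 == [::] then des (C1 p1 p2) = des p1
         else des (C1 p1 p2) = des p1 + 1 + des p2),
        len (C1 p1 p2) = len p1 + 1 + len p2 &
        sldes (C1 p1 p2) = sldes p1 + sldes p2]).
Proof.
Proof.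
split.
  move=> p1 p2 i P1 P2 n1 n2 Hi.
  have [c1 [c2 [c3 [c4 [c5 c6]]]]] := C1_stats P1 P2.
  have [d1 [d2 [d3 [d4 [d5 d6]]]]] := C2_stats P1 P2 n1 n2 Hi.
  rewrite n1 in c3; rewrite n2 in c4.
  by repeat split.
move=> p1 p2 P1 P2 _.
have [c1 [c2 [c3 [c4 [c5 c6]]]]] := C1_stats P1 P2.
split => //.
  case: eqVneq c3 => [E|NE] c3; last by rewrite c3.
  by rewrite c3 E.
case: eqVneq c4 => [E|NE] c4; last by rewrite c4.
by rewrite c4 E -[des [::]]/0 -[nat_of_bool ([::] != [::])]/0 !addn0.
Qed.
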